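(* Let $U$ be a supertropical monoid and $E$ a TE-relation on $U$. Then the set $U/E$ of $E$-equivalence classes carries a unique structure of a supertropical monoid such that the map $\pi_E:U\to U/E$, $x\mapsto[x]_E$, is a transmission.
   Context: A supertropical monoid is a monoid $(U,\cdot)$ with absorbing element $0$ and a distinguished central idempotent $e$ with $ex=0\Rightarrow x=0$, together with a total ordering on $M:=eU$, compatible with multiplication and with $0$ least, making $M$ a bipotent semiring (addition $=\max$). A transmission $\alpha:U\to V$ is a map with $\alpha(0)=0$, $\alpha(1)=1$, $\alpha(xy)=\alpha(x)\alpha(y)$, $\alpha(e_U)=e_V$, and $x\le y\Rightarrow\alpha(x)\le\alpha(y)$ for $x,y\in eU$. An equivalence relation $E$ on $U$ is a TE-relation if: (TE1) it is multiplicative: $x\sim_E y\Rightarrow xz\sim_E yz$ and $zx\sim_E zy$; (TE2) its restriction to $M$ is order compatible: if $x_1,x_2,x_3,x_4\in M$ with $x_1\le x_2$, $x_3\le x_4$, $x_1\sim_E x_4$, $x_2\sim_E x_3$, then $x_1\sim_E x_2$; (TE3) if $x\in U$ and $ex\sim_E 0$, then $x\sim_E 0$. *)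

(* Defs.v *)
Set Implicit Arguments.

(* Data of a supertropical monoid on a carrier T:
   multiplication, 1, 0, the ghost idempotent e, and an order relation
   (only meaningful on the ghost ideal M = eT). *)
Record stm_ops (T : Type) := STMOps {
  smul : T -> T -> T;
  sone : T;
  szero : T;
  se : T;
  sle : T -> T -> Prop
}.

Definition inM (T : Type) (S : stm_ops T) (x : T) : Prop :=
  exists y, x = smul S (se S) y.

Definition is_stm (T : Type) (S : stm_ops T) : Prop :=
  let mul := smul S in let one := sone S in let zero := szero S in
  let e := se S in let le := sle S in
  (forall x y z, mul (mul x y) z = mul x (mul y z)) /\
  (forall x, mul one x = x) /\ (forall x, mul x one = x) /\
  (forall x, mul zero x = zero) /\ (forall x, mul x zero = zero) /\
  (forall x, mul e x = mul x e) /\ mul e e = e /\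
  (forall x, mul e x = zero -> x = zero) /\
  (forall x, inM S x -> le x x) /\
  (forall x y, inM S x -> inM S y -> le x y -> le y x -> x = y) /\
  (forall x y z, inM S x -> inM S y -> inM S z -> le x y -> le y z -> le x z) /\
  (forall x y, inM S x -> inM S y -> le x y \/ le y x) /\
  (* compatible with multiplication (so max distributes: M is a bipotent semiring) *)
  (forall x y z, inM S x -> inM S y -> inM S z -> le x y ->
     le (mul x z) (mul y z) /\ le (mul z x) (mul z y)) /\
  (forall x, inM S x -> le zero x).

Definition transmission (U V : Type) (SU : stm_ops U) (SV : stm_ops V)
  (alpha : U -> V) : Prop :=
  alpha (szero SU) = szero SV /\
  alpha (sone SU) = sone SV /\
  (forall x y, alpha (smul SU x y) = smul SV (alpha x) (alpha y)) /\
  alpha (se SU) = se SV /\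
  (forall x y, inM SU x -> inM SU y -> sle SU x y -> sle SV (alpha x) (alpha y)).

Definition TE_relation (U : Type) (S : stm_ops U) (E : U -> U -> Prop) : Prop :=
  (forall x, E x x) /\ (forall x y, E x y -> E y x) /\
  (forall x y z, E x y -> E y z -> E x z) /\
  (forall x y z, E x y -> E (smul S x z) (smul S y z) /\ E (smul S z x) (smul S z y)) /\
  (forall x1 x2 x3 x4, inM S x1 -> inM S x2 -> inM S x3 -> inM S x4 ->
     sle S x1 x2 -> sle S x3 x4 -> E x1 x4 -> E x2 x3 -> E x1 x2) /\
  (forall x, E (smul S (se S) x) (szero S) -> E x (szero S)).

Definition quot (U : Type) (E : U -> U -> Prop) : Type :=
  { P : U -> Prop | exists x, P = E x }.

Definition qproj (U : Type) (E : U -> U -> Prop) (x : U) : quot E :=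
  exist (fun P => exists x0, P = E x0) (E x) (ex_intro _ x eq_refl).

Definition same_stm (T : Type) (S1 S2 : stm_ops T) : Prop :=
  (forall x y, smul S1 x y = smul S2 x y) /\
  sone S1 = sone S2 /\ szero S1 = szero S2 /\ se S1 = se S2 /\
  (forall x y, inM S1 x -> inM S1 y -> (sle S1 x y <-> sle S2 x y)).

(* Main.v *)
Require Import Defs.
From Stdlib Require Import ClassicalEpsilon FunctionalExtensionality PropExtensionality ProofIrrelevance.
Set Implicit Arguments.

Definition rep (U:Type) (E:U->U->Prop) (c: quot E) : U :=
  proj1_sig (constructive_indefinite_description (fun x => proj1_sig c = E x) (proj2_sig c)).

Lemma rep_spec (U:Type) (E:U->U->Prop) (c: quot E) : proj1_sig c = E (rep c).
Proof. unfold rep. destruct (constructive_indefinite_description _ _) as [x Hx]; simpl. exact Hx. Qed.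

Lemma quot_eq (U:Type) (E:U->U->Prop) (c d : quot E) : proj1_sig c = proj1_sig d -> c = d.
Proof. destruct c as [c pc], d as [d pd]; simpl; intros ->; f_equal; apply proof_irrelevance. Qed.

Lemma qproj_rep (U:Type) (E:U->U->Prop) (c : quot E) : qproj E (rep c) = c.
Proof. apply quot_eq; simpl; symmetry; apply rep_spec. Qed.

Lemma qsurj (U:Type) (E:U->U->Prop) (c : quot E) : exists x, c = qproj E x.
Proof. exists (rep c); symmetry; apply qproj_rep. Qed.

Lemma qproj_eq (U:Type) (SU : stm_ops U) (E:U->U->Prop) (HE : TE_relation SU E) x y : E x y -> qproj E x = qproj E y.
Proof.
  destruct HE as (Hr & Hs & Ht & _). intro H.
  apply quot_eq; simpl; extensionality z; apply propositional_extensionality; split; eauto.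
Qed.

Lemma qproj_inj (U:Type) (SU : stm_ops U) (E:U->U->Prop) (HE : TE_relation SU E) x y : qproj E x = qproj E y -> E x y.
Proof.
  destruct HE as (Hr & _). intro H.
  apply (f_equal (@proj1_sig _ _)) in H; simpl in H. rewrite H. apply Hr.
Qed.

Definition mkS (U:Type) (SU : stm_ops U) (E:U->U->Prop) : stm_ops (quot E) :=
  STMOps (fun c d => qproj E (smul SU (rep c) (rep d))) (qproj E (sone SU)) (qproj E (szero SU))
    (qproj E (se SU))
    (fun c d => exists x y, inM SU x /\ inM SU y /\ c = qproj E x /\ d = qproj E y /\ sle SU x y).

Lemma mul_proj (U:Type) (SU : stm_ops U) (E:U->U->Prop) (HE : TE_relation SU E) x y :
  smul (mkS SU E) (qproj E x) (qproj E y) = qproj E (smul SU x y).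
Proof.
  simpl. apply (qproj_eq HE).
  pose proof (qproj_inj HE (qproj_rep (qproj E x))) as H1.
  pose proof (qproj_inj HE (qproj_rep (qproj E y))) as H2.
  destruct HE as (Hr & Hs & Ht & H1' & _).
  eapply Ht. apply (H1' _ _ (rep (qproj E y)) H1). apply (H1' _ _ x H2).
Qed.

Theorem theorem1p7 (U : Type) (SU : stm_ops U) (HU : is_stm SU)
  (E : U -> U -> Prop) (HE : TE_relation SU E) :
  exists S : stm_ops (quot E),
    is_stm S /\ transmission SU S (@qproj U E) /\
    (forall S' : stm_ops (quot E),
       is_stm S' -> transmission SU S' (@qproj U E) -> same_stm S S').
Proof.
  pose proof HU as HU'.
  destruct HU as (assoc & one_l & one_r & zl & zr & ecomm & eidem & enz & lrefl & lanti & ltrans & ltot & lmul & lzero).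
  pose proof HE as HE'.
  destruct HE as (Er & Es & Et & E1 & E2 & E3).
  assert (inMl : forall x z, inM SU x -> inM SU (smul SU x z)).
  { intros x z [a ->]. exists (smul SU a z). apply assoc. }
  assert (inMr : forall x z, inM SU x -> inM SU (smul SU z x)).
  { intros x z [a ->]. exists (smul SU z a). rewrite <- assoc, <- ecomm, assoc. reflexivity. }
  assert (inMe : forall a, inM SU (smul SU (se SU) a)) by (intro a; exists a; reflexivity).
  assert (inM0 : inM SU (szero SU)) by (exists (szero SU); symmetry; apply zr).
  set (S := mkS SU E).
  assert (mp : forall x y, smul S (qproj E x) (qproj E y) = qproj E (smul SU x y)) by (intros; apply mul_proj; exact HE').
  assert (qe : forall x y, E x y -> qproj E x = qproj E y) by (intros; apply (qproj_eq HE'); auto).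
  assert (qi : forall x y, qproj E x = qproj E y -> E x y) by (intros; apply (qproj_inj HE'); auto).
  assert (inMS : forall c, inM S c -> exists a, inM SU a /\ c = qproj E a).
  { intros c [y ->]. destruct (qsurj y) as [b ->]. exists (smul SU (se SU) b). split; repeat split; auto.
    apply mp. }
  assert (inMS' : forall a, inM SU a -> inM S (qproj E a)).
  { intros a [b ->]. exists (qproj E b). symmetry; apply mp. }
  exists S. split; [|split].
  - unfold is_stm; cbv zeta.
    repeat split.
    + intros x y z. destruct (qsurj x) as [a ->], (qsurj y) as [b ->], (qsurj z) as [c ->].
      rewrite !mp, assoc. reflexivity.
    + intros x. destruct (qsurj x) as [a ->]. simpl sone. rewrite mp, one_l. reflexivity.
    + intros x. destruct (qsurj x) as [a ->]. simpl sone. rewrite mp, one_r. reflexivity.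
    + intros x. destruct (qsurj x) as [a ->]. simpl szero. rewrite mp, zl. reflexivity.
    + intros x. destruct (qsurj x) as [a ->]. simpl szero. rewrite mp, zr. reflexivity.
    + intros x. destruct (qsurj x) as [a ->]. simpl se. rewrite !mp, ecomm. reflexivity.
    + simpl se. rewrite mp, eidem. reflexivity.
    + intros x. destruct (qsurj x) as [a ->]. simpl se; simpl szero. rewrite mp. intro H.
      apply qe, E3, qi, H.
    + intros x Hx. destruct (inMS x Hx) as [a [Ha ->]]. exists a, a; repeat split; auto.
    + intros x y _ _ [a [b [Ha [Hb [-> [-> Hab]]]]]] [a' [b' [Ha' [Hb' [Hya' [Hxb' Hab']]]]]].
      apply qe. apply (E2 a b a' b'); auto; apply qi; auto.
    + intros x y z _ _ _ [a [b [Ha [Hb [-> [-> Hab]]]]]] [b' [c [Hb' [Hc [Hyb' [-> Hbc]]]]]].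
      destruct (ltot a c Ha Hc) as [Hac|Hca].
      * exists a, c; repeat split; auto.
      * assert (Ebb : E b' b) by (apply qi; auto).
        assert (E b' a) by (apply (E2 b' a a b); eauto).
        assert (E b' c) by (apply (E2 b' c c a); eauto).
        exists a, a. repeat split; repeat split; auto. apply qe; eauto.
    + intros x y Hx Hy. destruct (inMS x Hx) as [a [Ha ->]], (inMS y Hy) as [b [Hb ->]].
      destruct (ltot a b Ha Hb); [left|right]; eauto 10; do 2 eexists; repeat split; eauto.
    + destruct H2 as [a [b [Ha [Hb [-> [-> Hab]]]]]].
      destruct (inMS z H1) as [c [Hc ->]]. rewrite !mp.
      destruct (lmul a b c Ha Hb Hc Hab). exists (smul SU a c), (smul SU b c); repeat split; auto.
    + destruct H2 as [a [b [Ha [Hb [-> [-> Hab]]]]]].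
      destruct (inMS z H1) as [c [Hc ->]]. rewrite !mp.
      destruct (lmul a b c Ha Hb Hc Hab). exists (smul SU c a), (smul SU c b); repeat split; auto.
    + intros x Hx. destruct (inMS x Hx) as [a [Ha ->]]. exists (szero SU), a; repeat split; auto.
  - repeat split; auto.
    intros x y Hx Hy Hxy. exists x, y; repeat split; auto.
  - intros S' HS' [t0 [t1 [tm [te tl]]]].
    destruct HS' as (_ & _ & _ & _ & _ & _ & _ & _ & _ & lanti' & _).
    assert (inMq : forall a, inM SU a -> inM S' (qproj E a)).
    { intros a [b ->]. exists (qproj E b). rewrite tm, te. reflexivity. }
    repeat split.
    + intros x y. destruct (qsurj x) as [a ->], (qsurj y) as [b ->]. rewrite mp, tm. reflexivity.
    + simpl. symmetry; auto.
    + simpl. symmetry; auto.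
    + simpl. symmetry; auto.
    + intros [a [b [Ha [Hb [-> [-> Hab]]]]]]. auto.
    + intros Hle. destruct (inMS x H) as [a [Ha ->]], (inMS y H0) as [b [Hb ->]].
      destruct (ltot a b Ha Hb) as [Hab|Hba].
      * exists a, b; repeat split; auto.
      * assert (qproj E a = qproj E b) as Heq by (apply lanti'; auto).
        rewrite Heq. exists b, b; repeat split; auto.
Qed.
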